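(* Consider a convex resource theory closed under tensor products in the sense that $\sigma\in\mathcal F\Rightarrow\sigma^{\otimes n}\in\mathcal F$ for all $n$. Let $\rho$ be a state, $\phi$ a pure state not in $\mathcal F$ (of the output space), $\varepsilon\in(0,1)$, and $n\in\mathbb N$. If there exists a probabilistic resource--non-generating transformation $\rho^{\otimes n}\to\tau$ where $\tau$ is a state with $F(\tau,\phi)\ge1-\varepsilon$, then $n\ge\log_{\Omega_{\mathcal F}(\rho)}\frac{(1-\varepsilon)(1-F_{\mathcal F}(\phi))}{\varepsilon F_{\mathcal F}(\phi)}$.
   Context: Finite dimensions; $A\le B$ means $B-A\ge0$. Each space carries a closed convex set $\mathcal F$ of free density operators. $R_{\max}(X\|Y)=\inf\{\lambda:X\le\lambda Y\}$, $\inf\emptyset=\infty$; $\Omega_{\mathcal F}(\rho)=\inf_{\sigma\in\mathcal F}R_{\max}(\rho\|\sigma)R_{\max}(\sigma\|\rho)$. $F_{\mathcal F}(\phi)=\max_{\sigma\in\mathcal F}\langle\phi|\sigma|\phi\rangle$. Fidelity $F(\rho,\sigma)=\|\sqrt\rho\sqrt\sigma\|_1^2$. $\mathbb O$: completely positive trace-non-increasing maps $\mathcal E$ such that for every free input $\sigma$ there exist a free output $\sigma'$ and $p\in[0,1]$ with $\mathcal E(\sigma)=p\sigma'$. A probabilistic transformation $\omega\to\tau$ exists iff $\tau$ lies in the closure of $\{\mathcal E(\omega)/\mathrm{Tr}\,\mathcal E(\omega):\mathcal E\in\mathbb O,\ \mathrm{Tr}\,\mathcal E(\omega)>0\}$.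 *)

(* Defs.v *)
From HB Require Import structures.
From Stdlib Require Import ClassicalEpsilon.
From mathcomp Require Import all_boot all_order all_algebra.
From mathcomp Require Import all_classical all_reals all_analysis.
From mathcomp.real_closed Require Import complex mxtens.
Set Implicit Arguments. Unset Strict Implicit. Unset Printing Implicit Defensive.
Import Order.TTheory GRing.Theory Num.Theory numFieldNormedType.Exports.
Local Open Scope ring_scope.
Local Open Scope classical_set_scope.

Section QRT.
Variable R : realType.
Local Notation C := R[i].

Definition rC (x : R) : C := real_complex R x.

Definition adjmx {m n} (A : 'M[C]_(m, n)) : 'M[C]_(n, m) := (map_mx Num.conj A)^T.

Definition psd {d} (A : 'M[C]_d) : Prop :=
  adjmx A = A /\ forall v : 'cV[C]_d, 0 <= (adjmx v *m A *m v) 0 0.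
Definition loewner {d} (A B : 'M[C]_d) : Prop := psd (B - A).

Definition density {d} (A : 'M[C]_d) : Prop := psd A /\ \tr A = 1.

(* R_max(X||Y) = inf {l : X <= l Y}, inf of the empty set = +oo *)
Definition Rmax {d} (X Y : 'M[C]_d) : \bar R :=
  ereal_inf [set l%:E | l in [set l : R | loewner X (rC l *: Y)]].

Definition Omega {d} (F : set 'M[C]_d) (rho : 'M[C]_d) : \bar R :=
  ereal_inf [set (Rmax rho s * Rmax s rho)%E | s in F].

Definition FF {m} (F : set 'M[C]_m) (phi : 'cV[C]_m) : R :=
  sup [set complex.Re ((adjmx phi *m s *m phi) 0 0) | s in F].

Definition mx_sqrt {d} (A : 'M[C]_d) : 'M[C]_d :=
  epsilon (inhabits 0) (fun B => psd B /\ B *m B = A).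

Definition trnorm {d} (A : 'M[C]_d) : R := complex.Re (\tr (mx_sqrt (adjmx A *m A))).

Definition fidelity {d} (rho sigma : 'M[C]_d) : R :=
  trnorm (mx_sqrt rho *m mx_sqrt sigma) ^+ 2.

Definition unit_vec {m} (phi : 'cV[C]_m) : Prop := adjmx phi *m phi = 1.
Definition pureproj {m} (phi : 'cV[C]_m) : 'M[C]_m := phi *m adjmx phi.

Definition convex_set {d} (F : set 'M[C]_d) : Prop :=
  forall x y (t : R), F x -> F y -> 0 <= t <= 1 ->
    F (rC t *: x + rC (1 - t) *: y).
Definition mx_cvg {d} (u : nat -> 'M[C]_d) (A : 'M[C]_d) : Prop :=
  forall i j, (fun k => complex.Re (u k i j)) @ \oo --> (complex.Re (A i j) : R) /\
              (fun k => complex.Im (u k i j)) @ \oo --> (complex.Im (A i j) : R).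
Definition closed_set {d} (F : set 'M[C]_d) : Prop :=
  forall (u : nat -> 'M[C]_d) A, (forall k, F (u k)) -> mx_cvg u A -> F A.

Definition free_set {d} (F : set 'M[C]_d) : Prop :=
  (exists s, F s) /\ (forall s, F s -> density s) /\ convex_set F /\ closed_set F.

(* complete positivity: id_k (x) E maps psd to psd for every k *)
Definition blk {k a} (X : 'M[C]_(k * a)) (i j : 'I_k) : 'M[C]_a :=
  \matrix_(r, s) X (mxtens_index (i, r)) (mxtens_index (j, s)).
Definition ampl {a b k} (E : 'M[C]_a -> 'M[C]_b) (X : 'M[C]_(k * a)) : 'M[C]_(k * b) :=
  \matrix_(p, q) E (blk X (mxtens_unindex p).1 (mxtens_unindex q).1)
                   (mxtens_unindex p).2 (mxtens_unindex q).2.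
Definition linear_map {a b} (E : 'M[C]_a -> 'M[C]_b) : Prop :=
  forall (c : C) X Y, E (c *: X + Y) = c *: E X + E Y.
Definition CPmap {a b} (E : 'M[C]_a -> 'M[C]_b) : Prop :=
  linear_map E /\ forall k (X : 'M[C]_(k * a)), psd X -> psd (ampl E X).
Definition trace_nonincr {a b} (E : 'M[C]_a -> 'M[C]_b) : Prop :=
  forall X, psd X -> \tr (E X) <= \tr X.
Definition nongen {a b} (Fa : set 'M[C]_a) (Fb : set 'M[C]_b)
  (E : 'M[C]_a -> 'M[C]_b) : Prop :=
  forall s, Fa s -> exists s', Fb s' /\ exists p : R, 0 <= p <= 1 /\ E s = rC p *: s'.
Definition opO {a b} (Fa : set 'M[C]_a) (Fb : set 'M[C]_b)
  (E : 'M[C]_a -> 'M[C]_b) : Prop :=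
  CPmap E /\ trace_nonincr E /\ nongen Fa Fb E.

(* probabilistic transformation omega -> tau: tau lies in the closure of
   { E(omega)/Tr E(omega) : E in O, Tr E(omega) > 0 } *)
Definition prob_trans {a b} (Fa : set 'M[C]_a) (Fb : set 'M[C]_b)
  (omega : 'M[C]_a) (tau : 'M[C]_b) : Prop :=
  forall e : R, 0 < e -> exists E, opO Fa Fb E /\ 0 < \tr (E omega) /\
    forall i j, `| ((\tr (E omega))^-1 *: E omega) i j - tau i j | < rC e.

End QRT.

(* Main.v *)
Require Import Defs.
From HB Require Import structures.
From mathcomp Require Import all_boot all_order all_algebra.
From mathcomp Require Import all_classical all_reals all_analysis.
From mathcomp.real_closed Require Import complex mxtens.
From mathcomp Require Import spectral sesquilinear.
From mathcomp Require Import ring lra.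
Import Order.TTheory GRing.Theory Num.Theory numFieldNormedType.Exports.
Local Open Scope ring_scope.
Local Open Scope classical_set_scope.


Section QS. Variable R : realType. Local Notation C := R[i].
Lemma adjmxK {m n} (A : 'M[C]_(m, n)) : adjmx (adjmx A) = A.
Proof. by apply/matrixP=> i j; rewrite !mxE conjCK. Qed.
Lemma adjmxM {m n p} (A : 'M[C]_(m, n)) (B : 'M[C]_(n, p)) :
  adjmx (A *m B) = adjmx B *m adjmx A.
Proof. by rewrite /adjmx map_mxM trmx_mul. Qed.
Lemma adjmxD {m n} (A B : 'M[C]_(m, n)) : adjmx (A + B) = adjmx A + adjmx B.
Proof. by apply/matrixP=> i j; rewrite !mxE rmorphD. Qed.
Lemma adjmxN {m n} (A : 'M[C]_(m, n)) : adjmx (- A) = - adjmx A.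
Proof. by apply/matrixP=> i j; rewrite !mxE rmorphN. Qed.
Lemma adjmxB {m n} (A B : 'M[C]_(m, n)) : adjmx (A - B) = adjmx A - adjmx B.
Proof. by rewrite adjmxD adjmxN. Qed.
Lemma adjmxZ {m n} (c : C) (A : 'M[C]_(m, n)) : adjmx (c *: A) = Num.conj c *: adjmx A.
Proof. by apply/matrixP=> i j; rewrite !mxE rmorphM. Qed.
Lemma adjmx1 {n} : adjmx (1%:M : 'M[C]_n) = 1%:M.
Proof. by apply/matrixP=> i j; rewrite !mxE rmorph_nat eq_sym. Qed.
Lemma adjmx0 {m n} : adjmx (0 : 'M[C]_(m,n)) = 0.
Proof. by apply/matrixP=> i j; rewrite !mxE conjC0. Qed.

Lemma gram_diag {a b} (N : 'M[C]_(a, b)) j :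
  (adjmx N *m N) j j = \sum_i Num.conj (N i j) * N i j.
Proof. by rewrite !mxE; apply: eq_bigr => i _; rewrite !mxE. Qed.

Lemma gram_diag_ge0 {a b} (N : 'M[C]_(a, b)) j : 0 <= (adjmx N *m N) j j.
Proof. rewrite gram_diag; apply: sumr_ge0 => i _; rewrite mulrC; exact: mul_conjC_ge0. Qed.

Lemma gram_eq0 {a b} (N : 'M[C]_(a, b)) : adjmx N *m N = 0 -> N = 0.
Proof.
move=> H; apply/matrixP=> i j; rewrite mxE.
have := gram_diag N j; rewrite H mxE => /esym/eqP.
rewrite psumr_eq0 => [/allP/(_ i (mem_index_enum _))|k _].
  by rewrite /= mulrC mul_conjC_eq0 => /eqP.
by rewrite mulrC mul_conjC_ge0.
Qed.

Definition qf {d} (A : 'M[C]_d) (v : 'cV[C]_d) : C := (adjmx v *m A *m v) 0 0.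


Lemma qfD {d} (A B : 'M[C]_d) v : qf (A + B) v = qf A v + qf B v.
Proof. by rewrite /qf mulmxDr mulmxDl mxE. Qed.

Lemma qfN {d} (A : 'M[C]_d) v : qf (- A) v = - qf A v.
Proof. by rewrite /qf mulmxN mulNmx mxE. Qed.

Lemma qfB {d} (A B : 'M[C]_d) v : qf (A - B) v = qf A v - qf B v.
Proof. by rewrite qfD qfN. Qed.

Lemma qfZ {d} (c : C) (A : 'M[C]_d) v : qf (c *: A) v = c * qf A v.
Proof. by rewrite /qf -scalemxAr -scalemxAl mxE. Qed.

Lemma psd_gram {a b} (N : 'M[C]_(a, b)) : psd (adjmx N *m N).
Proof.
split; first by rewrite adjmxM adjmxK.
move=> v; have -> : adjmx v *m (adjmx N *m N) *m v = adjmx (N *m v) *m (N *m v).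
  by rewrite adjmxM !mulmxA.
exact: gram_diag_ge0.
Qed.

Lemma psd_conj {a b} (Y : 'M[C]_a) (M : 'M[C]_(a, b)) :
  psd Y -> psd (adjmx M *m Y *m M).
Proof.
move=> [hY pY]; split; first by rewrite !adjmxM adjmxK hY mulmxA.
move=> v; have -> : adjmx v *m (adjmx M *m Y *m M) *m v = adjmx (M *m v) *m Y *m (M *m v).
  by rewrite adjmxM !mulmxA.
exact: pY.
Qed.

Lemma psd1 {n} : psd (1%:M : 'M[C]_n).
Proof. by have := psd_gram (1%:M : 'M[C]_n); rewrite adjmx1 mulmx1. Qed.

Lemma psd0 {n} : psd (0 : 'M[C]_n).
Proof. by split; [rewrite adjmx0 | move=> v; rewrite mulmx0 mul0mx mxE]. Qed.

Lemma psdD {n} (A B : 'M[C]_n) : psd A -> psd B -> psd (A + B).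
Proof.
move=> [hA pA] [hB pB]; split; first by rewrite adjmxD hA hB.
by move=> v; have := qfD A B v; rewrite /qf => ->; apply: addr_ge0.
Qed.

Lemma conj_ge0 (c : C) : 0 <= c -> Num.conj c = c.
Proof. by move=> c0; rewrite conj_Creal // ger0_real. Qed.

Lemma psdZ {n} (c : C) (A : 'M[C]_n) : 0 <= c -> psd A -> psd (c *: A).
Proof.
move=> c0 [hA pA]; split; first by rewrite adjmxZ hA conj_ge0.
by move=> v; have := qfZ c A v; rewrite /qf => ->; apply: mulr_ge0.
Qed.

Lemma psd_qf {n} (A : 'M[C]_n) v : psd A -> 0 <= qf A v.
Proof. by case=> _ ; apply. Qed.

Lemma delta_qf {n} (A : 'M[C]_n) i : qf A (delta_mx i 0) = A i i.
Proof.
rewrite /qf; have -> : adjmx (delta_mx i 0 : 'cV[C]_n) = delta_mx 0 i.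
  by apply/matrixP=> a b; rewrite !mxE rmorph_nat andbC.
by rewrite -mulmxA -colE -rowE !mxE.
Qed.

Lemma psd_tr_ge0 {n} (A : 'M[C]_n) : psd A -> 0 <= \tr A.
Proof. move=> pA; rewrite /mxtrace; apply: sumr_ge0 => i _; rewrite -delta_qf; exact: psd_qf. Qed.

Lemma loewner_qf {n} (A B : 'M[C]_n) v : loewner A B -> qf A v <= qf B v.
Proof. by move=> h; rewrite -subr_ge0 -qfB; apply: psd_qf. Qed.

Lemma loewner_tr {n} (A B : 'M[C]_n) : loewner A B -> \tr A <= \tr B.
Proof. by move=> h; have := psd_tr_ge0 (B - A) h; rewrite linearB /= subr_ge0. Qed.


Lemma tstar_adj {m n} (M : 'M[C]_(m,n)) : (M ^t*)%sesqui = adjmx M.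
Proof. by rewrite /adjmx map_trmx. Qed.

Lemma qf_conj {a b} (Y : 'M[C]_a) (M : 'M[C]_(a, b)) v :
  qf (adjmx M *m Y *m M) v = qf Y (M *m v).
Proof. by rewrite /qf adjmxM !mulmxA. Qed.

Lemma psd_diag {n} (h : 'rV[C]_n) : (forall i, 0 <= h 0 i) -> psd (diag_mx h).
Proof.
move=> h0; split.
  apply/matrixP=> i j; rewrite !mxE; case: (eqVneq i j) => [->|ne].
    by rewrite !mulr1n conj_ge0.
  by rewrite !mulr0n conjC0.
move=> v; rewrite mul_mx_diag !mxE; apply: sumr_ge0 => i _; rewrite !mxE.
rewrite mulrAC; apply: mulr_ge0; last exact: h0.
by rewrite mulrC; exact: mul_conjC_ge0.
Qed.

Lemma psd_sqrt_ex {n} (A : 'M[C]_n) : psd A -> exists S : 'M[C]_n, psd S /\ S *m S = A.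
Proof.
move=> pA; have hA := pA.1.
have nA : A \is normalmx by apply/normalmxP; rewrite tstar_adj hA.
have /orthomx_spectralP eA := nA.
move: eA; set U := spectralmx A; set d := spectral_diag A => eA.
have uU : U \is unitarymx := spectral_unitarymx A.
have UU : U *m adjmx U = 1%:M by rewrite -tstar_adj; apply/unitarymxP.
have iU : invmx U = adjmx U by rewrite invmx_unitary // tstar_adj.
have UU' : adjmx U *m U = 1%:M by rewrite -iU mulVmx // spectral_unit.
rewrite iU in eA.
have d0 : forall i, 0 <= d 0 i.
  move=> i; have := psd_qf A (adjmx U *m (delta_mx i 0 : 'cV[C]_n)) pA.
  by rewrite eA qf_conj mulmxA UU mul1mx delta_qf mxE eqxx mulr1n.
set h := \row_i sqrtC (d 0 i).
exists (adjmx U *m diag_mx h *m U); split.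
  by apply: psd_conj; apply: psd_diag => i; rewrite mxE sqrtC_ge0; exact: d0.
rewrite eA !mulmxA -(mulmxA (adjmx U *m diag_mx h) U) UU mulmx1.
rewrite -(mulmxA (adjmx U) (diag_mx h)) mulmx_diag; congr (_ *m diag_mx _ *m _).
by apply/rowP=> j; rewrite !mxE -expr2 sqrtCK.
Qed.

Lemma mx_sqrtP {n} (A : 'M[C]_n) : psd A -> psd (mx_sqrt A) /\ mx_sqrt A *m mx_sqrt A = A.
Proof.
move=> pA; have [S HS] := psd_sqrt_ex A pA.
exact: (ClassicalEpsilon.epsilon_spec (inhabits 0) (fun B => psd B /\ B *m B = A) (ex_intro _ S HS)).
Qed.

Lemma psd_gramE {n} (A : 'M[C]_n) : psd A -> A = adjmx (mx_sqrt A) *m mx_sqrt A.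
Proof. by move=> pA; have [[h _] e] := mx_sqrtP A pA; rewrite h e. Qed.

Lemma adjmx_tens {m n p q} (A : 'M[C]_(m, n)) (B : 'M[C]_(p, q)) :
  adjmx (A *t B) = adjmx A *t adjmx B.
Proof. by apply/matrixP=> i j; rewrite !mxE rmorphM. Qed.

Lemma psd_tens {m n} (A : 'M[C]_m) (B : 'M[C]_n) : psd A -> psd B -> psd (A *t B).
Proof.
move=> pA pB; rewrite (psd_gramE A pA) (psd_gramE B pB) -tensmx_mul -adjmx_tens.
exact: psd_gram.
Qed.

Lemma loewner_tens {m n} (A B : 'M[C]_m) (C' D : 'M[C]_n) (a c : C) :
  psd A -> psd D -> 0 <= c -> loewner A (a *: B) -> loewner C' (c *: D) ->
  loewner (A *t C') ((a * c) *: (B *t D)).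
Proof.
move=> pA pD c0 h1 h2; rewrite /loewner.
have -> : (a * c) *: (B *t D) - A *t C' = (a *: B - A) *t (c *: D) + A *t (c *: D - C').
  by apply/matrixP=> i j; rewrite !mxE; ring.
by apply: psdD; apply: psd_tens => //; apply: psdZ.
Qed.

Lemma psd_ntens {n} (A : 'M[C]_n) k : psd A -> psd (A ^t k).
Proof.
move=> pA; case: k => [|k]; first exact: psd1.
elim: k => [|k IH]; first by rewrite ntensmx1.
by rewrite ntensmxSS; apply: psd_tens.
Qed.

Lemma loewner_ntens {n} (A B : 'M[C]_n) (a : C) k : psd A -> psd B -> 0 <= a ->
  loewner A (a *: B) -> loewner (A ^t k) (a ^+ k *: B ^t k).
Proof.
move=> pA pB a0 h; case: k => [|k].
  by rewrite /loewner expr0 scale1r subrr; exact: psd0.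
elim: k => [|k IH]; first by rewrite !ntensmx1 expr1.
rewrite !ntensmxSS exprS; apply: loewner_tens => //.
- exact: (psd_ntens B k.+1 pB).
- exact: (exprn_ge0 _ a0).
Qed.

Lemma sum_dr {n} (F : 'I_n -> C) x : \sum_r F r * (x == r)%:R = F x.
Proof.
rewrite (bigD1 x) //= eqxx mulr1 big1 ?addr0 // => r /negbTE.
by rewrite eq_sym => ->; rewrite mulr0.
Qed.

Lemma sum_dl {n} (F : 'I_n -> C) x : \sum_r (x == r)%:R * F r = F x.
Proof. by rewrite -[RHS](sum_dr F x); apply: eq_bigr => r _; rewrite mulrC. Qed.

Lemma linear_mapB {a b} (E : 'M[C]_a -> 'M[C]_b) : linear_map E -> forall X Y, E (X - Y) = E X - E Y.
Proof.
move=> lin X Y.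
have := lin (-1) Y X; rewrite !scaleN1r => h.
by rewrite addrC h addrC.
Qed.

Lemma linear_mapZ {a b} (E : 'M[C]_a -> 'M[C]_b) : linear_map E -> forall c X, E (c *: X) = c *: E X.
Proof.
move=> lin c X.
have E0 : E 0 = 0.
  by have := lin 1 0 0; rewrite scale1r addr0 scale1r => /(congr1 (fun M => M - E 0)); rewrite subrr addrK => /esym.
by have := lin c X 0; rewrite addr0 E0 addr0.
Qed.

Lemma adjmxE {m n} (A : 'M[C]_(m, n)) i j : adjmx A i j = Num.conj (A j i).
Proof. by rewrite !mxE. Qed.

Definition PiM n : 'M[C]_(n, 1 * n) := \matrix_(r, p) (((mxtens_unindex p).2 == r)%:R).

Definition ThM n : 'M[C]_(1 * n, n) := \matrix_(p, s) ((mxtens_index (ord0, s) == p)%:R).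

Lemma PiTh n : PiM n *m ThM n = 1%:M.
Proof.
apply/matrixP=> r s; rewrite !mxE.
under eq_bigr => p _ do rewrite !mxE.
by rewrite sum_dr mxtens_indexK eq_sym.
Qed.

Lemma PiKey n (Z : 'M[C]_n) :
  adjmx (PiM n) *m Z *m PiM n = \matrix_(p, q) Z (mxtens_unindex p).2 (mxtens_unindex q).2.
Proof.
apply/matrixP=> p q; rewrite !mxE.
under eq_bigr => r _ do rewrite !mxE.
rewrite sum_dr.
under eq_bigr => s _ do rewrite adjmxE !mxE rmorph_nat.
by rewrite sum_dl.
Qed.

Lemma CP_psd {a b} (E : 'M[C]_a -> 'M[C]_b) : CPmap E -> forall Y, psd Y -> psd (E Y).
Proof.
move=> [lin cp] Y pY.
have pX := psd_conj Y (PiM a) pY.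
have := cp 1%N _ pX.
have -> : ampl E (adjmx (PiM a) *m Y *m PiM a) = adjmx (PiM b) *m E Y *m PiM b.
  have bX : forall i j, blk (adjmx (PiM a) *m Y *m PiM a) i j = Y.
    by move=> i j; apply/matrixP=> r s; rewrite /blk PiKey !mxE !mxtens_indexK.
  by rewrite [RHS]PiKey /ampl; apply/matrixP=> p q; rewrite !mxE bX.
move/(psd_conj _ (ThM b)).
have -> : adjmx (ThM b) *m (adjmx (PiM b) *m E Y *m PiM b) *m ThM b
   = adjmx (PiM b *m ThM b) *m E Y *m (PiM b *m ThM b).
  by rewrite adjmxM !mulmxA.
by rewrite PiTh adjmx1 mul1mx mulmx1.
Qed.

Lemma PP {m} (phi : 'cV[C]_m) : unit_vec phi -> pureproj phi *m pureproj phi = pureproj phi.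
Proof. by move=> u; rewrite /pureproj mulmxA -(mulmxA phi) u mulmx1. Qed.

Lemma adjP {m} (phi : 'cV[C]_m) : adjmx (pureproj phi) = pureproj phi.
Proof. by rewrite /pureproj adjmxM adjmxK. Qed.

Lemma trP {m} (phi : 'cV[C]_m) : unit_vec phi -> \tr (pureproj phi) = 1.
Proof. by move=> u; rewrite /pureproj mxtrace_mulC u mxtrace1. Qed.

Lemma psdP {m} (phi : 'cV[C]_m) : psd (pureproj phi).
Proof. by have := psd_gram (adjmx phi); rewrite adjmxK. Qed.

Lemma PXP {m} (phi : 'cV[C]_m) (X : 'M[C]_m) :
  pureproj phi *m X *m pureproj phi = qf X phi *: pureproj phi.
Proof.
rewrite /pureproj /qf.
transitivity (phi *m (adjmx phi *m X *m phi) *m adjmx phi); first by rewrite !mulmxA.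
by rewrite {1}[adjmx phi *m X *m phi]mx11_scalar mul_mx_scalar -scalemxAl.
Qed.

Lemma sqrt_rank1 {m} (phi : 'cV[C]_m) (S : 'M[C]_m) (c : C) : unit_vec phi -> psd S ->
  S *m S = c *: pureproj phi ->
  [/\ S = qf S phi *: pureproj phi, (qf S phi)^+2 = c & 0 <= qf S phi].
Proof.
move=> u pS; set P := pureproj phi => eS.
have hS := pS.1.
set Q := 1%:M - P.
have hQ : adjmx Q = Q by rewrite /Q adjmxB adjmx1 adjP.
have PQ : P *m Q = 0 by rewrite /Q mulmxBr mulmx1 PP // subrr.
have QP : Q *m P = 0 by rewrite /Q mulmxBl mul1mx PP // subrr.
have SQ : S *m Q = 0.
  apply: gram_eq0; rewrite adjmxM hQ hS mulmxA -(mulmxA Q) eS.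
  by rewrite -scalemxAr -scalemxAl QP mul0mx scaler0.
have SP : S = S *m P.
  by rewrite -[LHS]mulmx1 -[1%:M](subrK P) -/Q mulmxDr SQ add0r.
have PS : S = P *m S.
  by rewrite -[LHS]hS {1}SP adjmxM adjP hS.
have eq1 : S = qf S phi *: P by rewrite -PXP -PS -SP.
have a0 : 0 <= qf S phi by exact: psd_qf.
split => //.
have : S *m S = (qf S phi)^+2 *: P.
  by rewrite {1 2}eq1 -scalemxAl -scalemxAr PP // scalerA expr2.
rewrite eS => /(congr1 mxtrace).
by rewrite !linearZ /= trP // !mulr1 => ->.
Qed.


Lemma Re_sqr (a : C) : 0 <= a -> complex.Re (a ^+ 2) = (complex.Re a) ^+ 2.
Proof.
case: a => x y h; have /= y0 := ger0_Im h; subst y.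
by rewrite expr2 /= mulr0 subr0.
Qed.

Lemma fidelity_pure {m} (tau : 'M[C]_m) (phi : 'cV[C]_m) : unit_vec phi -> psd tau ->
  fidelity tau (pureproj phi) = complex.Re (qf tau phi).
Proof.
move=> u pt; set P := pureproj phi.
have sP : mx_sqrt P = P.
  have [pB eB] := mx_sqrtP P (psdP phi).
  have eB' : mx_sqrt P *m mx_sqrt P = 1 *: pureproj phi by rewrite scale1r.
  have [e1 e2 e3] := sqrt_rank1 _ _ _ u pB eB'.
  have a1 : qf (mx_sqrt P) phi = 1.
    move/eqP: e2; rewrite sqrf_eq1 => /orP[/eqP //|/eqP h].
    by move: e3; rewrite h oppr_ge0 ler10.
  by rewrite {1}e1 a1 scale1r.
rewrite /fidelity sP.
have [pT eT] := mx_sqrtP tau pt.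
have eG : adjmx (mx_sqrt tau *m P) *m (mx_sqrt tau *m P) = qf tau phi *: P.
  by rewrite adjmxM adjP pT.1 -mulmxA (mulmxA (mx_sqrt tau)) eT mulmxA /P PXP.
have [pS eS] := mx_sqrtP _ (psd_gram (mx_sqrt tau *m P)).
rewrite /trnorm; rewrite eG in pS eS *.
have [] := sqrt_rank1 _ _ _ u pS eS.
set S := mx_sqrt _; set a := qf S phi => e1 e2 e3.
by rewrite e1 linearZ /= trP // mulr1 -e2 Re_sqr.
Qed.

Lemma Re_le (x y : C) : x <= y -> complex.Re x <= complex.Re y.
Proof. by rewrite lecE => /andP[]. Qed.

Lemma tr11 (A : 'M[C]_1) : \tr A = A 0 0.
Proof. by rewrite /mxtrace big_ord1. Qed.

Lemma qf_le_tr {m} (phi : 'cV[C]_m) (X : 'M[C]_m) : unit_vec phi -> psd X -> qf X phi <= \tr X.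
Proof.
move=> u pX; set Q := 1%:M - pureproj phi.
have hQ : adjmx Q = Q by rewrite /Q adjmxB adjmx1 adjP.
have QQ : Q *m Q = Q by rewrite /Q mulmxBl mul1mx mulmxBr mulmx1 PP // subrr subr0.
have e : \tr X = qf X phi + \tr (adjmx Q *m X *m Q).
  rewrite hQ mxtrace_mulC mulmxA QQ /Q mulmxBl mul1mx linearB /=.
  rewrite /pureproj -mulmxA mxtrace_mulC tr11 /qf.
  by rewrite addrC subrK.
rewrite [X in _ <= X]e lerDl; apply: psd_tr_ge0; exact: psd_conj.
Qed.

Lemma loewner_ge1 {d} (X Y : 'M[C]_d) (l : R) : density X -> density Y ->
  loewner X (rC l *: Y) -> 1 <= l.
Proof.
move=> [pX tX] [pY tY] /loewner_tr; rewrite linearZ /= tX tY mulr1 => /Re_le.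
by rewrite /rC /=.
Qed.

Lemma Rmax_ge1 {d} (X Y : 'M[C]_d) : density X -> density Y -> (1%:E <= Rmax X Y)%E.
Proof.
move=> dX dY; apply/ereal_infP => _ [l Hl <-]; rewrite lee_fin.
exact: (loewner_ge1 X Y l dX dY Hl).
Qed.

Lemma Rmax_approx {d} (X Y : 'M[C]_d) (A g : R) : Rmax X Y = A%:E -> 0 < g ->
  exists l, loewner X (rC l *: Y) /\ l < A + g.
Proof.
move=> eA g0; have : (Rmax X Y < (A + g)%:E)%E by rewrite eA lte_fin ltrDl.
by move/ereal_inf_lt => [_ [l Hl <-]]; rewrite lte_fin => ?; exists l.
Qed.

Lemma Omega_approx {d} (F : set 'M[C]_d) rho (O g : R) : density rho ->
  (forall s, F s -> density s) -> Omega F rho = O%:E -> 0 < g ->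
  exists s l mu, [/\ F s, loewner rho (rC l *: s), loewner s (rC mu *: rho)
                   & [/\ 1 <= l, 1 <= mu & l * mu <= O + g]].
Proof.
move=> dr dF eO g0.
have : (Omega F rho < (O + g)%:E)%E by rewrite eO lte_fin ltrDl.
move/ereal_inf_lt => [_ [s Fs <-]] hlt.
have ds := dF s Fs.
have a1 := Rmax_ge1 rho s dr ds; have b1 := Rmax_ge1 s rho ds dr.
move: hlt a1 b1.
case ea : (Rmax rho s) => [A| |]; case eb : (Rmax s rho) => [B| |] => hlt a1 b1.
- rewrite lee_fin in a1; rewrite lee_fin in b1.
  rewrite -EFinM lte_fin in hlt.
  set gm := Num.min 1 ((O + g - A * B) / (A + B + 1)).
  have gm0 : 0 < gm.
    by rewrite /gm lt_min ltr01 /= divr_gt0 // ?subr_gt0 //; lra.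
  have gm1 : gm <= 1 by rewrite /gm ge_min lexx.
  have gm2 : gm * (A + B + 1) <= O + g - A * B.
    rewrite -ler_pdivlMr; last by lra.
    by rewrite /gm ge_min lexx orbT.
  have [l [Hl ll]] := Rmax_approx rho s A gm ea gm0.
  have [mu [Hm lm]] := Rmax_approx s rho B gm eb gm0.
  have l1 := loewner_ge1 rho s l dr ds Hl.
  have m1 := loewner_ge1 s rho mu ds dr Hm.
  exists s, l, mu; split => //; split => //.
  have h1 : l * mu <= (A + gm) * (B + gm).
    apply: ler_pM; lra.
  have h2 : gm * gm <= gm by rewrite ler_piMr //; lra.
  nra.
- by move: hlt; rewrite mulry gtr0_sg ?mul1e //; rewrite lee_fin in a1; lra.
- by move: b1; rewrite leeNy_eq.
- by move: hlt; rewrite mulyr gtr0_sg ?mul1e //; rewrite lee_fin in b1; lra.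
- by move: hlt; rewrite mulyy.
- by move: b1; rewrite leeNy_eq.
- by move: a1; rewrite leeNy_eq.
- by move: a1; rewrite leeNy_eq.
- by move: a1; rewrite leeNy_eq.
Qed.


Lemma Re_le_norm (x : C) : complex.Re x <= complex.Re `|x| /\ - complex.Re x <= complex.Re `|x|.
Proof.
case: x => a b; rewrite normc_def /=.
have h : `|a| <= Num.sqrt (a ^+ 2 + b ^+ 2).
  by rewrite -sqrtr_sqr ler_wsqrtr // lerDl sqr_ge0.
split; apply: le_trans h; [exact: ler_norm | rewrite -normrN; exact: ler_norm].
Qed.

Lemma qf_norm_bound {m} (D : 'M[C]_m) (v : 'cV[C]_m) (e : C) :
  (forall i j, `|D i j| <= e) ->
  `|qf D v| <= e * \sum_j \sum_i `|v i 0| * `|v j 0|.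
Proof.
move=> hD; rewrite /qf mxE mulr_sumr.
apply: le_trans (ler_norm_sum _ _ _) _; apply: ler_sum => j _.
rewrite mxE mulr_suml mulr_sumr.
apply: le_trans (ler_norm_sum _ _ _) _; apply: ler_sum => i _.
rewrite adjmxE !normrM norm_conjC.
rewrite mulrAC [X in X <= _]mulrC; apply: ler_wpM2r => //.
Qed.

Lemma ReB (x y : C) : complex.Re (x - y) = complex.Re x - complex.Re y.
Proof. by case: x => a b; case: y => c d. Qed.

Lemma Re_rCM (e : R) (z : C) : complex.Re (rC e * z) = e * complex.Re z.
Proof. by case: z => a b; rewrite /rC /= mul0r subr0. Qed.

Definition Kr {m} (v : 'cV[C]_m) : R := complex.Re (\sum_j \sum_i `|v i 0| * `|v j 0|).

Lemma qf_close {m} (A B : 'M[C]_m) (v : 'cV[C]_m) (e : R) :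
  (forall i j, `|A i j - B i j| < rC e) ->
  complex.Re (qf A v) - complex.Re (qf B v) <= e * Kr v /\
  complex.Re (qf B v) - complex.Re (qf A v) <= e * Kr v.
Proof.
move=> h.
have hD : forall i j, `|(A - B) i j| <= rC e by move=> i j; rewrite !mxE; exact: ltW.
have hb := qf_norm_bound (A - B) v (rC e) hD.
have hr := Re_le _ _ hb; rewrite Re_rCM -/(Kr v) in hr.
have [h1 h2] := Re_le_norm (qf (A - B) v).
rewrite qfB ReB in h1 h2 hr.
split; first exact: le_trans h1 hr.
by rewrite opprB in h2; exact: le_trans h2 hr.
Qed.

Lemma Kr_ge0 {m} (v : 'cV[C]_m) : 0 <= Kr v.
Proof.
have : (0 : C) <= \sum_j \sum_i `|v i 0| * `|v j 0|.
  by apply: sumr_ge0 => j _; apply: sumr_ge0 => i _; rewrite mulr_ge0.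
by move/(Re_le 0); rewrite /Kr.
Qed.

Lemma Re1 : complex.Re (1 : C) = 1.
Proof. by []. Qed.

Lemma FF_ub {m} (F : set 'M[C]_m) phi s : free_set F -> unit_vec phi -> F s ->
  complex.Re (qf s phi) <= FF F phi.
Proof.
move=> [_ [dF _]] u Fs.
apply: sup_upper_bound; last by exists s.
split; first by exists (complex.Re (qf s phi)), s.
exists 1 => _ [t Ft <-].
have [pt tt] := dF t Ft.
have := Re_le _ _ (qf_le_tr phi t u pt); rewrite tt Re1; exact.
Qed.


Lemma real_core (tr c p b F La Mu B f0 dl : R) :
  0 < tr -> 0 <= p -> 0 <= La -> 0 <= Mu -> La * Mu <= B -> b <= F -> F < 1 -> 0 <= F ->
  tr * c <= La * p * b -> p * (1 - b) <= Mu * (tr - tr * c) ->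
  f0 - dl <= c -> c <= 1 -> 0 < f0 - dl -> 1 - c <= 1 - f0 + dl ->
  (f0 - dl) * (1 - F) <= B * F * (1 - f0 + dl).
Proof.
move=> t0 p0 La0 Mu0 LMB bF F1 F0 ha hb hc1 hc2 hf hc3.
have c0 : 0 < c by lra.
have tc0 : 0 < tr * c by exact: mulr_gt0.
have pp : 0 < p.
  rewrite lt_neqAle p0 andbT; apply/negP => /eqP pz.
  by move: ha; rewrite -pz mulr0 mul0r; lra.
have h1 : tr * c <= La * p * F.
  apply: le_trans ha _; apply: ler_wpM2l => //; exact: mulr_ge0.
have h2 : p * (1 - F) <= Mu * tr * (1 - c).
  apply: le_trans (_ : p * (1 - b) <= _); first by apply: ler_wpM2l => //; lra.
  have -> : Mu * tr * (1 - c) = Mu * (tr - tr * c) by ring.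
  exact: hb.
have h3 : tr * c * (p * (1 - F)) <= La * p * F * (Mu * tr * (1 - c)).
  have pF : 0 <= p * (1 - F) by apply: mulr_ge0 => //; lra.
  exact: (ler_pM (ltW tc0) pF h1 h2).
have h4 : c * (1 - F) <= La * Mu * F * (1 - c).
  have tp : 0 < tr * p by exact: mulr_gt0.
  rewrite -(ler_pM2l tp).
  have -> : tr * p * (c * (1 - F)) = tr * c * (p * (1 - F)) by ring.
  by have -> : tr * p * (La * Mu * F * (1 - c)) = La * p * F * (Mu * tr * (1 - c)) by ring.
have B0 : 0 <= B by apply: le_trans LMB; exact: mulr_ge0.
have h5 : La * Mu * F * (1 - c) <= B * F * (1 - c).
  apply: ler_wpM2r; first lra.
  by apply: ler_wpM2r.
have h6 : B * F * (1 - c) <= B * F * (1 - f0 + dl).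
  by apply: ler_wpM2l => //; exact: mulr_ge0.
have h7 : (f0 - dl) * (1 - F) <= c * (1 - F) by apply: ler_wpM2r; lra.
by apply: le_trans h7 _; apply: le_trans h4 _; apply: le_trans h5 _.
Qed.

Lemma powle (x y : R) n : 0 <= x -> x <= y -> x ^+ n <= y ^+ n.
Proof.
move=> x0 xy; apply: lerXn2r => //; rewrite nnegrE //; exact: le_trans xy.
Qed.

Lemma pow_bound (x dl : R) n : 0 <= x -> 0 <= dl -> dl <= 1 ->
  (x + dl) ^+ n <= x ^+ n + dl * n%:R * (x + 1) ^+ n.
Proof.
move=> x0 d0 d1; elim: n => [|n IH]; first by rewrite !expr0 mulr0 mul0r addr0.
have X0 : 0 <= x ^+ n by exact: exprn_ge0.
have XY : x ^+ n <= (x + 1) ^+ n by apply: powle => //; lra.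
have Y0 : 0 <= (x + 1) ^+ n by apply: exprn_ge0; lra.
have n0 : 0 <= (n%:R : R) by exact: ler0n.
rewrite !exprS -natr1.
have h1 : (x + dl) * (x + dl) ^+ n <= (x + dl) * (x ^+ n + dl * n%:R * (x + 1) ^+ n).
  by apply: ler_wpM2l => //; lra.
apply: le_trans h1 _.
set X := x ^+ n in X0 XY *; set Y := (x + 1) ^+ n in XY Y0 *.
set N := (n%:R : R) in n0 *.
have h2 : dl * X <= dl * ((x + 1) * Y) by apply: ler_wpM2l => //; nra.
have h3 : (x + dl) * (dl * N * Y) <= (x + 1) * (dl * N * Y).
  apply: ler_wpM2r; last lra.
  by apply: mulr_ge0 => //; apply: mulr_ge0.
nra.
Qed.


Lemma real_limit (f0 F O d0 : R) (n : nat) : 0 < d0 -> 0 <= F -> F <= 1 -> 0 <= O ->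
  0 <= f0 -> f0 <= 1 ->
  (forall dl, 0 < dl -> dl <= d0 -> (f0 - dl) * (1 - F) <= (O + dl) ^+ n * F * (1 - f0 + dl)) ->
  f0 * (1 - F) <= O ^+ n * F * (1 - f0).
Proof.
move=> d00 F0 F1 O0 f00 f01 H.
set Bd := n%:R * (O + 1) ^+ n.
have Bd0 : 0 <= Bd by apply: mulr_ge0; [exact: ler0n | apply: exprn_ge0; lra].
have On0 : 0 <= O ^+ n by exact: exprn_ge0.
set K := 1 + O ^+ n * F + Bd * F * (2 - f0).
have K0 : 0 <= K.
  rewrite /K; apply: addr_ge0; first by apply: addr_ge0 => //; exact: mulr_ge0.
  by apply: mulr_ge0; [exact: mulr_ge0 | lra].
apply/ler_addgt0Pr => e e0.
set dl := Num.min (Num.min d0 1) (e / (K + 1)).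
have eK : 0 < e / (K + 1) by apply: divr_gt0 => //; lra.
have dl0 : 0 < dl by rewrite /dl !lt_min d00 ltr01 eK.
have dl1 : dl <= 1 by rewrite /dl !ge_min lexx orbT.
have dld : dl <= d0 by rewrite /dl !ge_min lexx.
have dle : dl <= e / (K + 1) by rewrite /dl !ge_min lexx orbT.
have h := H dl dl0 dld.
have hp := pow_bound O dl n O0 (ltW dl0) dl1.
rewrite -mulrA -/Bd in hp.
have s1 : (O + dl) ^+ n * F * (1 - f0 + dl) <= (O ^+ n + dl * Bd) * F * (1 - f0 + dl).
  by apply: ler_wpM2r; [lra | apply: ler_wpM2r].
have s2 : dl * K <= e.
  have : dl * (K + 1) <= e by rewrite -ler_pdivlMr //; lra.
  have : dl * K <= dl * (K + 1) by apply: ler_wpM2l; lra.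
  lra.
have s3 : dl * (Bd * F * (1 - f0 + dl)) <= dl * (Bd * F * (2 - f0)).
  by apply: ler_wpM2l; [lra | apply: ler_wpM2l; [exact: mulr_ge0 | lra]].
have s4 : dl * (1 - F) <= dl * 1 by apply: ler_wpM2l; lra.
rewrite /K in s2.
lra.
Qed.


Lemma Im0E (z : C) : complex.Im z = 0 -> z = rC (complex.Re z).
Proof. by case: z => a b /= ->. Qed.

Lemma rCX (x : R) n : rC x ^+ n = rC (x ^+ n).
Proof. by rewrite /rC rmorphXn. Qed.

Lemma rC_ge0 (x : R) : 0 <= x -> (0 : C) <= rC x.
Proof. by rewrite /rC ler0c. Qed.

Lemma Re_rC (x : R) : complex.Re (rC x) = x.
Proof. by []. Qed.

Lemma ReD (x y : C) : complex.Re (x + y) = complex.Re x + complex.Re y.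
Proof. by case: x => a b; case: y => c d. Qed.


Lemma trBZ {k} (a b : C) (A B : 'M[C]_k) : \tr (a *: A - b *: B) = a * \tr A - b * \tr B.
Proof. by rewrite linearB !linearZ. Qed.


Lemma key_step d m (Fin : set 'M[C]_d) (Fpow : forall k, set 'M[C]_(d ^ k))
  (Fout : set 'M[C]_m) rho phi n tau (O dl : R) :
  free_set Fin -> free_set Fout -> (forall s k, Fin s -> Fpow k (ntensmx s k)) ->
  density rho -> unit_vec phi -> prob_trans (Fpow n) Fout (ntensmx rho n) tau ->
  Omega Fin rho = O%:E -> 0 <= FF Fout phi -> FF Fout phi < 1 ->
  0 < dl -> dl < complex.Re (qf tau phi) ->
  (complex.Re (qf tau phi) - dl) * (1 - FF Fout phi)
    <= (O + dl) ^+ n * FF Fout phi * (1 - complex.Re (qf tau phi) + dl).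
Proof.
move=> fin fout hpow drho u ptr eO F0 F1 dl0 dlf.
set F := FF Fout phi; set f0 := complex.Re (qf tau phi).
have Fin_d : forall s, Fin s -> density s := fin.2.1.
have [s [l [mu [Fs Hl Hm [l1 m1 lm]]]]] := Omega_approx Fin rho O dl drho Fin_d eO dl0.
have ds := Fin_d s Fs.
have l0 : (0 : C) <= rC l by apply: rC_ge0; lra.
have m0 : (0 : C) <= rC mu by apply: rC_ge0; lra.
have Lw := loewner_ntens rho s (rC l) n drho.1 ds.1 l0 Hl.
have Ls := loewner_ntens s rho (rC mu) n ds.1 drho.1 m0 Hm.
have pw := psd_ntens rho n drho.1.
have Fsn := hpow s n Fs.
have K0 := Kr_ge0 phi.
set K := Kr phi in K0 *.
set e := dl / (K + 1).
have e0 : 0 < e by apply: divr_gt0 => //; lra.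
have [E [[cpE [_ ngE]] [t0 close]]] := ptr e e0.
have lin := cpE.1.
have [sg [Fsg [p [/andP[p0 p1] eZ]]]] := ngE _ Fsn.
have dsg := fout.2.1 sg Fsg.
move: Lw Ls pw t0 close; set w := ntensmx rho n; set sn := ntensmx s n => Lw Ls pw t0 close.
set W := E w.
have pW : psd W := CP_psd E cpE w pw.
have L1 : loewner W (rC l ^+ n *: (rC p *: sg)).
  by rewrite /loewner -eZ -linear_mapZ // -linear_mapB //; exact: CP_psd.
have L2 : loewner (rC p *: sg) (rC mu ^+ n *: W).
  by rewrite /loewner -eZ /W -linear_mapZ // -linear_mapB //; exact: CP_psd.
set t := \tr W in t0 *.
have [tIm tRe] : complex.Im t = 0 /\ 0 < complex.Re t.
  by move: t0; rewrite ltcE /= => /andP[/eqP h1 h2]; split.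
set tr := complex.Re t in tRe *.
have tE : t = rC tr := Im0E t tIm.
have tnz : t != 0 by rewrite gt_eqF.
set tau' := t^-1 *: W in close *.
have WE : W = t *: tau' by rewrite /tau' scalerA mulfV // scale1r.
set c := complex.Re (qf tau' phi).
have qW : complex.Re (qf W phi) = tr * c by rewrite {1}WE qfZ tE Re_rCM.
set b := complex.Re (qf sg phi).
have bF : b <= F := FF_ub Fout phi sg fout u Fsg.
have q1 : tr * c <= l ^+ n * p * b.
  have := Re_le _ _ (loewner_qf _ _ phi L1).
  by rewrite qfZ qfZ rCX !Re_rCM qW mulrA.
have q2 : p * (1 - b) <= mu ^+ n * (tr - tr * c).
  have := Re_le _ _ (qf_le_tr phi _ u L2).
  rewrite qfB !qfZ trBZ dsg.2 -/t tE mulr1 rCX !ReB !Re_rCM qW !Re_rC -/b.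
  lra.
have [cl1 cl2] := qf_close tau' tau phi e close.
rewrite -/c -/f0 in cl1 cl2.
have eK : e * K <= dl.
  rewrite /e mulrAC ler_pdivrMr; last lra.
  by apply: ler_wpM2l; lra.
have c1 : c <= 1.
  have := Re_le _ _ (qf_le_tr phi W u pW); rewrite qW -/t => h.
  by rewrite -(ler_pM2l tRe) mulr1.
have RC := real_core tr c p b F (l ^+ n) (mu ^+ n) ((O + dl) ^+ n) f0 dl.
rewrite -/K in cl1 cl2.
refine (RC tRe p0 _ _ _ bF F1 F0 q1 q2 _ c1 _ _).
- by apply: exprn_ge0; lra.
- by apply: exprn_ge0; lra.
- by rewrite -exprMn; apply: powle => //; apply: mulr_ge0; lra.
- by clear -cl2 eK; lra.
- by clear -dlf; rewrite -/f0 in dlf; lra.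
- by clear -cl2 eK; lra.
Qed.

Lemma main_sec (d m : nat) (Fin : set 'M[C]_d) (Fpow : forall k : nat, set 'M[C]_(d ^ k))
  (Fout : set 'M[C]_m) :
  free_set Fin -> (forall k, free_set (Fpow k)) -> free_set Fout ->
  (forall (s : 'M[C]_d) (k : nat), Fin s -> Fpow k (ntensmx s k)) ->
  forall (rho : 'M[C]_d) (phi : 'cV[C]_m) (eps : R) (n : nat) (tau : 'M[C]_m),
  density rho -> unit_vec phi -> ~ Fout (pureproj phi) -> 0 < eps < 1 ->
  prob_trans (Fpow n) Fout (ntensmx rho n) tau -> density tau ->
  1 - eps <= fidelity tau (pureproj phi) ->
  forall O : R, Omega Fin rho = O%:E -> 1 < O -> 0 < FF Fout phi ->
  ln ((1 - eps) * (1 - FF Fout phi) / (eps * FF Fout phi)) / ln O <= n%:R.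
Proof.
move=> fin fpow fout hpow rho phi eps n tau drho u nF /andP[e0 e1] ptr dtau hfid O eO O1 FF0.
have hf0 : 1 - eps <= complex.Re (qf tau phi) by rewrite -fidelity_pure //; exact: dtau.1.
have f01 : complex.Re (qf tau phi) <= 1.
  by have := Re_le _ _ (qf_le_tr phi tau u dtau.1); rewrite dtau.2 Re1.
set F := FF Fout phi in FF0 *.
set f0 := complex.Re (qf tau phi) in hf0 f01 *.
have lnO : 0 < ln O by apply: ln_gt0.
have epsF : 0 < eps * F by apply: mulr_gt0.
case: (leP 1 F) => hF.
  have : (1 - eps) * (1 - F) / (eps * F) <= 0.
    by rewrite ler_pdivrMr // mul0r; apply: mulr_ge0_le0; lra.
  by move/ln0 => ->; rewrite mul0r; exact: ler0n.
have O0 : 0 <= O by lra.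
have f00 : 0 < f0 by lra.
have lim : f0 * (1 - F) <= O ^+ n * F * (1 - f0).
  apply: (real_limit f0 F O (Num.min 1 (f0 / 2)) n); try lra.
    by rewrite lt_min ltr01 /=; apply: divr_gt0; lra.
  move=> dl dl0; rewrite le_min => /andP[dl1 dl2].
  apply: (key_step _ _ Fin Fpow Fout rho phi n tau O dl fin fout hpow drho u ptr eO (ltW FF0) hF dl0).
  rewrite -/f0; lra.
have arg_le : (1 - eps) * (1 - F) / (eps * F) <= O ^+ n.
  rewrite ler_pdivrMr //.
  have h1 : (1 - eps) * (1 - F) <= f0 * (1 - F) by apply: ler_wpM2r; lra.
  have OF : 0 <= O ^+ n * F by apply: mulr_ge0; [exact: exprn_ge0 | lra].
  have h2 : O ^+ n * F * (1 - f0) <= O ^+ n * F * eps by apply: ler_wpM2l => //; lra.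
  have -> : O ^+ n * (eps * F) = O ^+ n * F * eps by ring.
  lra.
rewrite ler_pdivrMr //.
case: (lerP ((1 - eps) * (1 - F) / (eps * F)) 0) => ha.
  by rewrite ln0 //; apply: mulr_ge0; [exact: ler0n | lra].
have h : ln ((1 - eps) * (1 - F) / (eps * F)) <= ln (O ^+ n).
  by rewrite ler_ln ?posrE //; apply: exprn_gt0; lra.
rewrite lnXn in h; last lra.
by rewrite mulr_natl.
Qed.



End QS.

Theorem corollary2 (R : realType) (d m : nat)
  (Fin : set 'M[R[i]]_d) (Fpow : forall k : nat, set 'M[R[i]]_(d ^ k))
  (Fout : set 'M[R[i]]_m) :
  free_set Fin -> (forall k, free_set (Fpow k)) -> free_set Fout ->
  (forall (s : 'M[R[i]]_d) (k : nat), Fin s -> Fpow k (ntensmx s k)) ->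
  forall (rho : 'M[R[i]]_d) (phi : 'cV[R[i]]_m) (eps : R) (n : nat)
         (tau : 'M[R[i]]_m),
  density rho -> unit_vec phi -> ~ Fout (pureproj phi) -> 0 < eps < 1 ->
  prob_trans (Fpow n) Fout (ntensmx rho n) tau -> density tau ->
  1 - eps <= fidelity tau (pureproj phi) ->
  forall O : R, Omega Fin rho = O%:E -> 1 < O -> 0 < FF Fout phi ->
  ln ((1 - eps) * (1 - FF Fout phi) / (eps * FF Fout phi)) / ln O <= n%:R.
Proof. exact: main_sec. Qed.
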